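(* Let $A$ be a commutative unital ring of characteristic $0$, $n\ge4$, $k\in\{3,\ldots,n-1\}$ and $(b_1,\ldots,b_k)\in A^k$. Let $s=(1_A,n_A-2_A,1_A,2_A,\ldots,2_A)\in A^n$ (last $n-3$ entries equal to $2_A$). Then $(b_1,\ldots,b_k)$ can be used to reduce $s$ (i.e. $(b_1,\ldots,b_k)$ is a $\lambda$-quiddity over $A$ and there exists $(c_1,\ldots,c_{n+2-k})\in A^{n+2-k}$ with $s\sim(c_1,\ldots,c_{n+2-k})\oplus(b_1,\ldots,b_k)$) if and only if $(b_1,\ldots,b_k)=(k_A-2_A,1_A,2_A,\ldots,2_A,1_A)$ or $(b_1,\ldots,b_k)=(1_A,2_A,\ldots,2_A,1_A,k_A-2_A)$, where in each case the number of entries equal to $2_A$ is $k-3$ (possibly zero).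
   Context: $k_A=k\cdot1_A$ for an integer $k$. For $a_1,\ldots,a_n\in A$, $M_n(a_1,\ldots,a_n)=\begin{pmatrix}a_n&-1\\1&0\end{pmatrix}\cdots\begin{pmatrix}a_1&-1\\1&0\end{pmatrix}$. An $n$-tuple $(a_1,\ldots,a_n)\in A^n$ is a $\lambda$-quiddity over $A$ if $M_n(a_1,\ldots,a_n)=\pm\mathrm{Id}$. For $(a_1,\ldots,a_n)\in A^n$, $(b_1,\ldots,b_m)\in A^m$, define $(a_1,\ldots,a_n)\oplus(b_1,\ldots,b_m)=(a_1+b_m,a_2,\ldots,a_{n-1},a_n+b_1,b_2,\ldots,b_{m-1})$. Write $(a_1,\ldots,a_n)\sim(b_1,\ldots,b_n)$ if $(b_1,\ldots,b_n)$ is obtained from $(a_1,\ldots,a_n)$ or from $(a_n,\ldots,a_1)$ by a cyclic permutation. *)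

(* Defs.v *)
From mathcomp Require Import all_boot all_algebra.
Set Implicit Arguments. Unset Strict Implicit. Unset Printing Implicit Defensive.
Import GRing.Theory.
Local Open Scope ring_scope.

Definition char0 (A : comNzRingType) : Prop := forall m : nat, (m.+1)%:R != 0 :> A.

Definition qmat (A : comNzRingType) (a : A) : 'M[A]_2 :=
  \matrix_(i < 2, j < 2)
    if i == 0 then (if j == 0 then a else -1) else (if j == 0 then 1 else 0).

(* M_n(a_1,...,a_n) = qmat a_n * ... * qmat a_1 *)
Definition Mn (A : comNzRingType) (s : seq A) : 'M[A]_2 :=
  foldl (fun M a => qmat a *m M) 1%:M s.

Definition lambda_quiddity (A : comNzRingType) (s : seq A) : Prop :=
  Mn s = 1%:M \/ Mn s = - 1%:M.

(* (a_1..a_n) (+) (b_1..b_m) = (a_1+b_m, a_2..a_{n-1}, a_n+b_1, b_2..b_{m-1});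
   meaningful for n, m >= 2 *)
Definition oplus (A : comNzRingType) (a b : seq A) : seq A :=
  (head 0 a + last 0 b) :: take (size a - 2) (behead a)
  ++ (last 0 a + head 0 b) :: take (size b - 2) (behead b).

Definition qsim (A : comNzRingType) (a b : seq A) : Prop :=
  exists i : nat, b = rot i a \/ b = rot i (rev a).

Definition sseq (A : comNzRingType) (n : nat) : seq A :=
  [:: 1; n%:R - 2%:R; 1] ++ nseq (n - 3) 2%:R.

(* Main.v *)
Require Import Defs.
From mathcomp Require Import all_boot all_algebra.
From mathcomp Require Import ring zify.
Set Implicit Arguments. Unset Strict Implicit. Unset Printing Implicit Defensive.
Import GRing.Theory.
Local Open Scope ring_scope.

Section S.
Variable A : comNzRingType.
Definition mk2 (a b c d : A) : 'M[A]_2 := \matrix_(i < 2, j < 2)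
    if i == 0 then (if j == 0 then a else b) else (if j == 0 then c else d).

Lemma qmatE (a : A) : qmat a = mk2 a (-1) 1 0. Proof. by []. Qed.

Lemma mk2_mul (a b c d a' b' c' d' : A) : mk2 a b c d *m mk2 a' b' c' d' =
  mk2 (a*a'+b*c') (a*b'+b*d') (c*a'+d*c') (c*b'+d*d').
Proof.
apply/matrixP=> i j; rewrite !mxE !big_ord_recl big_ord0 !mxE /=.
by case: i => [[|[|?]] ?] //; case: j => [[|[|?]] ?] //=; rewrite addr0.
Qed.

Lemma mk2_1 : (1%:M : 'M[A]_2) = mk2 1 0 0 1.
Proof. by apply/matrixP=> i j; rewrite !mxE; case: i => [[|[|?]] ?] //; case: j => [[|[|?]] ?]. Qed.

Lemma mk2_N1 : (- 1%:M : 'M[A]_2) = mk2 (-1) 0 0 (-1).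
Proof. by apply/matrixP=> i j; rewrite !mxE; case: i => [[|[|?]] ?] //; case: j => [[|[|?]] ?] //=; rewrite ?oppr0. Qed.

Lemma mk2_inj (a b c d a' b' c' d' : A) : mk2 a b c d = mk2 a' b' c' d' ->
  [/\ a = a', b = b', c = c' & d = d'].
Proof.
move/matrixP=> H; have := H 0 0; have := H 0 1; have := H 1 0; have := H 1 1.
by rewrite !mxE /=.
Qed.

Lemma foldl_M (s : seq A) (M0 : 'M[A]_2) :
  foldl (fun M a => qmat a *m M) M0 s = Mn s *m M0.
Proof.
elim: s M0 => [|x s IH] M0 /=; first by rewrite /Mn /= mul1mx.
by rewrite /Mn /= !IH mulmx1 mulmxA.
Qed.

Lemma Mn_cat (x y : seq A) : Mn (x ++ y) = Mn y *m Mn x.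
Proof. by rewrite /Mn foldl_cat foldl_M. Qed.

Lemma Mn_cons (x : A) s : Mn (x :: s) = Mn s *m qmat x.
Proof. by rewrite /Mn /= foldl_M mulmx1. Qed.

Lemma Mn_nil : Mn [::] = mk2 1 0 0 1.
Proof. by rewrite /Mn /= mk2_1. Qed.

Lemma Mn_nseq2 j : Mn (nseq j 2%:R) =
   mk2 (j.+1%:R) (- j%:R) (j%:R) (1 - j%:R).
Proof.
elim: j => [|j IH]; first by rewrite Mn_nil /= oppr0 ?subr0 ?addr0.
rewrite /= Mn_cons IH qmatE mk2_mul; congr mk2; rewrite !mulrS; ring.
Qed.

Lemma lam_facts (b1 bk : A) w p q r t :
  lambda_quiddity (b1 :: w ++ [:: bk]) -> Mn w = mk2 p q r t ->
  (p = 1 \/ p = -1) /\ r = bk * p /\ q = - (p * b1).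
Proof.
move=> HL Hw.
have E : Mn (b1 :: w ++ [:: bk]) =
  mk2 ((bk*p - r)*b1 + bk*q - t) (-(bk*p - r)) (p*b1 + q) (-p).
  rewrite Mn_cons Mn_cat Hw Mn_cons Mn_nil !qmatE !mk2_mul; congr mk2; ring.
have key : forall e, mk2 ((bk*p - r)*b1 + bk*q - t) (-(bk*p - r)) (p*b1 + q) (-p)
   = mk2 e 0 0 e -> r = bk * p /\ q = - (p * b1) /\ p = - e.
  move=> e /mk2_inj [_ h2 h3 h4]; split; last split.
  - by apply/eqP; rewrite eq_sym -subr_eq0 -oppr_eq0 h2.
  - by apply/eqP; rewrite -subr_eq0 opprK addrC h3.
  - by rewrite -h4 opprK.
case: HL => HL; rewrite E ?mk2_N1 ?mk2_1 in HL; have [h1 [h2 h3]] := key _ HL; do !split => //.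
- by right.
- by left; rewrite h3 opprK.
Qed.

Lemma mk2_00 (a b c d : A) : mk2 a b c d 0 0 = a.
Proof. by rewrite mxE. Qed.

Lemma mk2_eta (M : 'M[A]_2) : M = mk2 (M 0 0) (M 0 1) (M 1 0) (M 1 1).
Proof.
by apply/matrixP=> i j; rewrite !mxE; case: i => [[|[|?]] ?] //; case: j => [[|[|?]] ?] //=;
  congr (M _ _); apply/val_inj.
Qed.

Lemma lam_p (b1 bk : A) w : lambda_quiddity (b1 :: w ++ [:: bk]) ->
  Mn w 0 0 = 1 \/ Mn w 0 0 = -1.
Proof. by move=> HL; case: (lam_facts HL (mk2_eta (Mn w))). Qed.

Lemma bad_p (c : A) e : char0 A -> c = (e.+2)%:R -> c = 1 \/ c = -1 -> False.
Proof.
move=> ch -> [] H.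
  have : (e.+1)%:R = (e.+2)%:R - 1 :> A by rewrite [in RHS]mulrS; ring.
  by rewrite H subrr; apply/eqP; exact: ch.
have : (e.+3)%:R = (e.+2)%:R + 1 :> A by rewrite [in LHS]mulrS; ring.
by rewrite H addNr; apply/eqP; exact: ch.
Qed.

Lemma bad_d n a b (b1 bk : A) w : char0 A -> (a + b + 6 <= n)%N ->
  w = nseq a 2%:R ++ [:: 1; n%:R - 2%:R; 1] ++ nseq b 2%:R ->
  lambda_quiddity (b1 :: w ++ [:: bk]) -> False.
Proof.
move=> ch hn; have [e En] : exists e, n = (e + (a + b + 6))%N.
  by exists (n - (a+b+6))%N; rewrite subnK.
rewrite En => -> /lam_p; rewrite !Mn_cat !Mn_cons Mn_nil !Mn_nseq2 !qmatE !mk2_mul mk2_00.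
apply: (bad_p (e:=e) ch); rewrite !natrD; ring.
Qed.

Lemma bad_c n b (b1 bk : A) w : char0 A -> (b + 5 <= n)%N ->
  w = (n%:R - 2%:R) :: 1 :: nseq b 2%:R ->
  lambda_quiddity (b1 :: w ++ [:: bk]) -> False.
Proof.
move=> ch hn; have [e En] : exists e, n = (e + (b + 5))%N.
  by exists (n - (b+5))%N; rewrite subnK.
rewrite En => -> /lam_p; rewrite !Mn_cons !Mn_nseq2 !qmatE !mk2_mul mk2_00.
apply: (bad_p (e:=e) ch); rewrite !natrD; ring.
Qed.

Lemma bad_b n a (b1 bk : A) w : char0 A -> (a + 5 <= n)%N ->
  w = nseq a 2%:R ++ [:: 1; n%:R - 2%:R] ->
  lambda_quiddity (b1 :: w ++ [:: bk]) -> False.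
Proof.
move=> ch hn; have [e En] : exists e, n = (e + (a + 5))%N.
  by exists (n - (a+5))%N; rewrite subnK.
rewrite En => -> /lam_p; rewrite !Mn_cat !Mn_cons Mn_nil !Mn_nseq2 !qmatE !mk2_mul mk2_00.
apply: (bad_p (e:=e) ch); rewrite !natrD; ring.
Qed.

Lemma bad_single n (b1 bk : A) w : char0 A -> (4 <= n)%N ->
  w = [:: n%:R - 2%:R] ->
  lambda_quiddity (b1 :: w ++ [:: bk]) -> False.
Proof.
move=> ch hn; have [e En] : exists e, n = (e + 4)%N.
  by exists (n - 4)%N; rewrite subnK.
rewrite En => -> /lam_p; rewrite !Mn_cons Mn_nil !qmatE !mk2_mul mk2_00.
apply: (bad_p (e:=e) ch); rewrite !natrD; ring.
Qed.

Lemma bad_all j (b1 bk : A) w : char0 A -> w = nseq j.+1 2%:R ->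
  lambda_quiddity (b1 :: w ++ [:: bk]) -> False.
Proof.
move=> ch -> /lam_p; rewrite Mn_nseq2 mk2_00.
by apply: bad_p ch _.
Qed.

Lemma good1 j (b1 bk : A) w : w = 1 :: nseq j 2%:R ->
  lambda_quiddity (b1 :: w ++ [:: bk]) -> b1 = (j.+1)%:R /\ bk = 1.
Proof.
move=> -> HL.
have Hw : Mn (1 :: nseq j 2%:R) = mk2 1 (- (j.+1)%:R) 1 (- j%:R).
  rewrite Mn_cons Mn_nseq2 qmatE mk2_mul; congr mk2; rewrite ?mulrS; ring.
have [_ [h1 h2]] := lam_facts HL Hw.
by split; [apply: oppr_inj; rewrite h2 mul1r | rewrite h1 mulr1].
Qed.

Lemma good2 j (b1 bk : A) w : w = nseq j 2%:R ++ [:: 1] ->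
  lambda_quiddity (b1 :: w ++ [:: bk]) -> b1 = 1 /\ bk = (j.+1)%:R.
Proof.
move=> -> HL.
have Hw : Mn (nseq j 2%:R ++ [:: 1]) = mk2 1 (- 1) (j.+1)%:R (- j%:R).
  rewrite Mn_cat Mn_cons Mn_nil Mn_nseq2 qmatE !mk2_mul; congr mk2; rewrite ?mulrS; ring.
have [_ [h1 h2]] := lam_facts HL Hw.
by split; [apply: oppr_inj; rewrite h2 mul1r | rewrite h1 mulr1].
Qed.

Lemma lam_t1 j : lambda_quiddity ((j.+1)%:R :: (1 :: nseq j 2%:R) ++ [:: 1 : A]).
Proof.
right; rewrite mk2_N1 Mn_cons Mn_cat !Mn_cons Mn_nil Mn_nseq2 !qmatE !mk2_mul.
congr mk2; rewrite ?mulrS; ring.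
Qed.

Lemma lam_t2 j : lambda_quiddity (1 :: (nseq j 2%:R ++ [:: 1]) ++ [:: (j.+1)%:R : A]).
Proof.
right; rewrite mk2_N1 Mn_cons !Mn_cat !Mn_cons Mn_nil Mn_nseq2 !qmatE !mk2_mul.
congr mk2; rewrite ?mulrS; ring.
Qed.

Lemma b_split (b : seq A) k : size b = k -> (2 <= k)%N ->
  b = head 0 b :: take (k - 2) (behead b) ++ [:: last 0 b].
Proof.
case: b => [<- //|x b /= <- Hk]; case/lastP: b Hk => [|b y] //= Hk.
rewrite size_rcons subSS subn1 /= -cats1 take_size_cat // last_cat /=.
by [].
Qed.

Lemma oplus_drop (c b : seq A) m k : size c = m -> size b = k -> (2 <= m)%N ->
  drop m (oplus c b) = take (k - 2) (behead b).
Proof.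
move=> Hc Hb Hm.
have -> : oplus c b = ((head 0 c + last 0 b) :: take (size c - 2) (behead c)
   ++ [:: last 0 c + head 0 b]) ++ take (size b - 2) (behead b).
  by rewrite /oplus /= -catA.
rewrite drop_size_cat ?Hb // /= size_cat /= size_takel ?Hc ?size_behead ?Hc; try lia.
Qed.

Lemma oplus_build (x0 y b1 bk : A) u w :
  oplus ((x0 - bk) :: u ++ [:: y - b1]) (b1 :: w ++ [:: bk]) = x0 :: u ++ y :: w.
Proof.
rewrite /oplus /= !size_cat /= !addn1 !subSS !subn0 take_size_cat //.
rewrite take_size_cat // !last_cat /= !subrK.
by [].
Qed.

Definition isForm (n : nat) (F : seq A) : Prop :=
 (exists p q, (p + q = n - 3)%N /\
    F = nseq p 2%:R ++ [:: 1; n%:R - 2%:R; 1] ++ nseq q 2%:R)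
 \/ F = [:: n%:R - 2%:R; 1] ++ nseq (n - 3) 2%:R ++ [:: 1]
 \/ F = [:: 1] ++ nseq (n - 3) 2%:R ++ [:: 1; n%:R - 2%:R].

Lemma size_sseq n : (3 <= n)%N -> size (sseq A n) = n.
Proof. by move=> h; rewrite /sseq size_cat size_nseq /=; lia. Qed.

Lemma rot_s n i : (4 <= n)%N -> isForm n (rot i (sseq A n)).
Proof.
move=> hn; case: i => [|[|[|j]]].
- by left; exists 0%N, (n - 3)%N; split; [lia | rewrite rot0].
- by right; left; rewrite /rot /sseq /=.
- by right; right; rewrite /rot /sseq /=.
case: (ltnP j.+3 n) => h; last first.
  left; exists 0%N, (n - 3)%N; split; first lia.
  by rewrite rot_oversize // size_sseq //; lia.
left; exists (n - 3 - j)%N, j; split; first lia.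
have E : sseq A n = ([:: 1; n%:R - 2%:R; 1] ++ nseq j 2%:R) ++ nseq (n - 3 - j) 2%:R.
  by rewrite /sseq -catA -nseqD; congr (_ ++ nseq _ _); lia.
have Ej : j.+3 = size ([:: 1; n%:R - 2%:R; 1] ++ nseq j (2%:R : A)).
  by rewrite size_cat size_nseq.
by rewrite E Ej rot_size_cat.
Qed.

Lemma rot_rs n i : (4 <= n)%N -> isForm n (rot i (rev (sseq A n))).
Proof.
move=> hn.
have R : rev (sseq A n) = nseq (n - 3) 2%:R ++ [:: 1; n%:R - 2%:R; 1].
  by rewrite /sseq rev_cat rev_nseq.
rewrite R; case: (leqP i (n - 3)) => h.
  left; exists (n - 3 - i)%N, i; split; first lia.
  have E : nseq (n - 3) (2%:R : A) = nseq i 2%:R ++ nseq (n - 3 - i) 2%:R.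
    by rewrite -nseqD; congr nseq; lia.
  have Ei : i = size (nseq i (2%:R : A)) by rewrite size_nseq.
  by rewrite E -catA {1}Ei rot_size_cat -catA.
case: (ltnP i n) => h2; last first.
  left; exists (n - 3)%N, 0%N; split; first lia.
  rewrite rot_oversize ?cats0 //; rewrite size_cat size_nseq /=; lia.
have [->|Ei] : i = (n - 2)%N \/ i = (n - 1)%N by lia.
  right; left.
  have -> : nseq (n - 3) (2%:R : A) ++ [:: 1; n%:R - 2%:R; 1] =
     (nseq (n - 3) 2%:R ++ [:: 1 : A]) ++ [:: n%:R - 2%:R; 1] by rewrite -catA.
  have -> : (n - 2)%N = size (nseq (n - 3) (2%:R : A) ++ [:: 1 : A]).
    rewrite size_cat size_nseq /=; lia.
  by rewrite rot_size_cat.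
right; right.
have -> : nseq (n - 3) (2%:R : A) ++ [:: 1; n%:R - 2%:R; 1] =
   (nseq (n - 3) 2%:R ++ [:: 1; n%:R - 2%:R]) ++ [:: 1] by rewrite -catA.
have -> : i = size (nseq (n - 3) (2%:R : A) ++ [:: 1; n%:R - 2%:R]).
  rewrite size_cat size_nseq /=; lia.
by rewrite rot_size_cat.
Qed.

Lemma classify n m F (b1 bk : A) : char0 A -> (4 <= n)%N -> (3 <= m)%N ->
  (m <= n - 1)%N -> isForm n F -> lambda_quiddity (b1 :: drop m F ++ [:: bk]) ->
  (drop m F = 1 :: nseq (n - m - 1) 2%:R /\ b1 = (n - m - 1).+1%:R /\ bk = 1) \/
  (drop m F = nseq (n - m - 1) 2%:R ++ [:: 1] /\ b1 = 1 /\ bk = (n - m - 1).+1%:R).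
Proof.
move=> ch hn hm1 hm2 [[p [q [Hpq ->]]] | [->|->]] HL.
- move: HL; rewrite drop_cat size_nseq; case: ltnP => h.
    rewrite drop_nseq => HL; exfalso.
    by apply: (bad_d (a:=(p - m)%N) (b:=q) ch _ (erefl _) HL); lia.
  case Ed: (m - p)%N => [|[|[|d]]] HL.
  + by exfalso; apply: (bad_d (a:=0%N) (b:=q) ch _ (erefl _) HL); lia.
  + by exfalso; apply: (bad_c (b:=q) ch _ (erefl _) HL); lia.
  + have [h1 h2] := good1 (j:=q) (erefl _) HL.
    have Eq : q = (n - m - 1)%N by lia.
    by left; rewrite /= -Eq.
  + move: HL; rewrite /= drop_nseq.
    have -> : (q - d = (q - d - 1).+1)%N by lia.
    by move=> HL; exfalso; apply: (bad_all ch (erefl _) HL).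
- have [m' Em] : exists m', m = m'.+2 by exists (m - 2)%N; lia.
  move: HL; rewrite Em.
  have -> : drop m'.+2 ([:: n%:R - 2%:R; 1] ++ nseq (n - 3) 2%:R ++ [:: 1]) =
     drop m' (nseq (n - 3) (2%:R : A) ++ [:: 1]) by [].
  rewrite drop_cat size_nseq; case: ltnP => h.
    rewrite drop_nseq => HL.
    have [h1 h2] := good2 (j:=(n - 3 - m')%N) (erefl _) HL.
    have Eq : (n - 3 - m' = n - m'.+2 - 1)%N by lia.
    by right; rewrite -Eq.
  have -> : (m' - (n - 3) = 0)%N by lia.
  move=> HL; have [h1 h2] := good2 (j:=0%N) (erefl _) HL.
  have Eq : (n - m'.+2 - 1 = 0)%N by lia.
  by right; rewrite Eq.
- have [m' Em] : exists m', m = m'.+1 by exists (m - 1)%N; lia.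
  move: HL; rewrite Em.
  have -> : drop m'.+1 ([:: 1] ++ nseq (n - 3) 2%:R ++ [:: 1; n%:R - 2%:R]) =
     drop m' (nseq (n - 3) (2%:R : A) ++ [:: 1; n%:R - 2%:R]) by [].
  rewrite drop_cat size_nseq; case: ltnP => h.
    rewrite drop_nseq => HL; exfalso.
    by apply: (bad_b (a:=(n - 3 - m')%N) ch _ (erefl _) HL); lia.
  have [E0|E0] : (m' - (n - 3) = 0)%N \/ (m' - (n - 3) = 1)%N by lia.
  rewrite E0.
    by move=> HL; exfalso; apply: (bad_b (a:=0%N) ch _ (erefl _) HL); lia.
  move=> HL; exfalso; rewrite /= in HL; apply: (bad_single (n:=n) ch hn _ HL); by rewrite E0.
Qed.
End S.

Theorem lemma4p9 (A : comNzRingType) (n k : nat) (b : seq A) :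
  char0 A -> (4 <= n)%N -> (3 <= k)%N -> (k <= n - 1)%N -> size b = k ->
  ((lambda_quiddity b /\
    exists c : seq A, size c = (n + 2 - k)%N /\ qsim (sseq A n) (oplus c b))
   <->
   (b = (k%:R - 2%:R) :: 1 :: nseq (k - 3) 2%:R ++ [:: 1] \/
    b = 1 :: nseq (k - 3) 2%:R ++ [:: 1; k%:R - 2%:R])).
Proof.
move=> ch hn hk1 hk2 hb.
have [j Ek] : exists j, k = (j + 3)%N by exists (k - 3)%N; lia.
have Ej : (k - 3 = j)%N by lia.
have E2 : (k%:R - 2%:R : A) = (j.+1)%:R by rewrite Ek natrD; ring.
rewrite Ej E2; split.
- move=> [HL [c [hc [i Hi]]]].
  have h2k : (2 <= k)%N by lia.
  have h2m : (2 <= n + 2 - k)%N by lia.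
  move: (b_split hb h2k) (oplus_drop hc hb h2m).
  move: (take _ _) (head _ _) (last _ _) => w b1 bk Eb Hd.
  have HF : isForm n (oplus c b) by case: Hi => ->; [apply: rot_s | apply: rot_rs].
  rewrite Eb in HL. rewrite -Hd in HL.
  have := classify ch hn _ _ HF HL.
  have Ej2 : (n - (n + 2 - k) - 1 = j)%N by lia.
  rewrite Ej2 Hd Eb; case; [lia | lia | |].
  + by move=> [-> [-> ->]]; left.
  + by move=> [-> [-> ->]]; right; rewrite -catA.
- set x := (n%:R - 2%:R : A).
  have [r Er] : exists r, (n - k = r.+1)%N by exists (n - k - 1)%N; lia.
  case=> Eb.
  + have Eb' : b = (j.+1)%:R :: (1 :: nseq j 2%:R) ++ [:: 1] by rewrite Eb.
    split; first by rewrite Eb'; apply: lam_t1.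
    exists ((2%:R - 1) :: (nseq r 2%:R ++ [:: 1]) ++ [:: x - (j.+1)%:R]).
    split; first by rewrite /= !size_cat size_nseq /=; lia.
    exists k; left; rewrite Eb' oplus_build.
    have E : sseq A n = ([:: 1; x; 1] ++ nseq j 2%:R) ++ nseq r.+1 2%:R.
      by rewrite /sseq -catA -nseqD; congr (_ ++ nseq _ _); lia.
    have Ek2 : k = size ([:: 1; x; 1] ++ nseq j (2%:R : A)).
      by rewrite size_cat size_nseq /=; lia.
    by rewrite E {1}Ek2 rot_size_cat /= -catA.
  + have Eb' : b = 1 :: (nseq j 2%:R ++ [:: 1]) ++ [:: (j.+1)%:R] by rewrite Eb -catA.
    split; first by rewrite Eb'; apply: lam_t2.
    exists ((x - (j.+1)%:R) :: (1 :: nseq r 2%:R) ++ [:: 2%:R - 1]).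
    split; first by rewrite /= !size_cat size_nseq /=; lia.
    exists 1%N; left; rewrite Eb' oplus_build.
    have En : (n - 3 = r + j.+1)%N by lia.
    by rewrite /rot /sseq /= En nseqD -catA.
Qed.
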